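(* For every $n\ge 2$, every symmetric pseudo-Boolean function of $n$ variables has a $y$-linear quadratization involving at most $n-2$ auxiliary variables.
   Context: A pseudo-Boolean function is a map $f:\{0,1\}^n\to\mathbb{R}$; it is symmetric if its value depends only on the Hamming weight $\sum_j x_j$. A quadratization of $f$ using $m$ auxiliary variables is a polynomial $g(x,y)$ of degree at most $2$ in $x_1,\ldots,x_n,y_1,\ldots,y_m$ such that $f(x)=\min\{g(x,y):y\in\{0,1\}^m\}$ for all $x\in\{0,1\}^n$. It is $y$-linear if it contains no product of two auxiliary variables, i.e. $g(x,y)=q(x)+\sum_{i=1}^m a_i(x)y_i$ with $q$ quadratic and each $a_i$ affine in $x$. *)

(* Defs.v *)
(* Coefficients/values in an arbitrary real field R
   (covers the reals of the paper; the statement is purely algebraic). *)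
From HB Require Import structures.
From mathcomp Require Import all_boot all_order all_algebra.
Set Implicit Arguments. Unset Strict Implicit. Unset Printing Implicit Defensive.
Import Order.TTheory GRing.Theory Num.Theory.
Local Open Scope ring_scope.

Definition hweight (n : nat) (x : 'I_n -> bool) : nat := (\sum_(j < n) (x j : nat))%N.

Definition symmetric_pb (R : realFieldType) (n : nat) (f : ('I_n -> bool) -> R) : Prop :=
  forall x x' : 'I_n -> bool, hweight x = hweight x' -> f x = f x'.

Record quadpoly (R : realFieldType) (V : finType) := QPoly {
  qc : R ;
  ql : V -> R ;
  qQ : V -> V -> R }.

Definition qeval (R : realFieldType) (V : finType) (g : quadpoly R V) (z : V -> R) : R :=
  qc g + \sum_(v : V) ql g v * z v + \sum_(v : V) \sum_(w : V) qQ g v w * z v * z w.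

Definition xy_point (R : realFieldType) (n m : nat) (x : 'I_n -> bool) (y : 'I_m -> bool)
  : 'I_n + 'I_m -> R :=
  fun v => match v with inl j => (x j)%:R | inr i => (y i)%:R end.

Definition is_quadratization (R : realFieldType) (n m : nat) (f : ('I_n -> bool) -> R)
  (g : quadpoly R ('I_n + 'I_m)%type) : Prop :=
  forall x : 'I_n -> bool,
    (forall y : 'I_m -> bool, f x <= qeval g ((@xy_point R n m x y))) /\
    (exists y : 'I_m -> bool, qeval g ((@xy_point R n m x y)) = f x).

Definition y_linear (R : realFieldType) (n m : nat) (g : quadpoly R ('I_n + 'I_m)%type) : Prop :=
  forall i k : 'I_m, qQ g (inr i) (inr k) = 0.

(* Main.v *)
Require Import Defs.
From HB Require Import structures.
From mathcomp Require Import all_boot all_order all_algebra.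
From mathcomp Require Import ring lra zify.
Import Order.TTheory GRing.Theory Num.Theory.
Local Open Scope ring_scope.

Lemma exmax (R : realFieldType) p (D : 'I_p.+1 -> R) : exists j0, forall j, D j <= D j0.
Proof. have [j0 _ H] := @arg_maxP _ R _ ord0 predT D isT. by exists j0 => j; apply: H. Qed.

Lemma nat_step (R : realFieldType) (k t : nat) :
  ((k.+2 - t)%:R - 2 * (k.+1 - t)%:R + (k - t)%:R : R) = (t == k.+1)%:R.
Proof.
case: (ltngtP t k.+1) => h.
- rewrite !natrB; try lia. rewrite !mulrSr /=. ring.
-   have -> : (k.+2 - t = 0)%N by lia.
  have -> : (k.+1 - t = 0)%N by lia.
  have -> : (k - t = 0)%N by lia. by rewrite /= mulr0 subr0 addr0.
- subst t.
  have -> : (k.+2 - k.+1 = 1)%N by lia.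
  have -> : (k.+1 - k.+1 = 0)%N by lia.
  have -> : (k - k.+1 = 0)%N by lia. by rewrite /= mulr0 subr0 addr0.
Qed.

Lemma key (R : realFieldType) (p : nat) (F : nat -> R) :
  exists (A B C : R) (d : 'I_p -> R) (t : 'I_p -> nat), (forall i, 0 <= d i) /\
   forall k, (k <= p.+2)%N ->
     F k = A + B * k%:R + C * (k%:R * k%:R) - \sum_(i < p) d i * (k - t i)%:R.
Proof.
pose D (j : 'I_p.+1) := F j.+2 - 2 * F j.+1 + F j.
have [j0 Hj0] := @exmax R p D.
pose C := D j0 / 2.
pose e (j : 'I_p.+1) := (C + C) - D j.
pose S k := \sum_(j < p.+1) e j * (k - j.+1)%:R.
have Sst : forall k (hk : (k < p.+1)%N), S k.+2 - 2 * S k.+1 + S k = e (Ordinal hk).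
  move=> k hk; rewrite /S mulr_sumr -sumrB -big_split /=.
  rewrite (bigD1 (Ordinal hk)) //= big1 ?addr0.
    have -> : (k.+2 - k.+1 = 1)%N by lia.
    have -> : (k.+1 - k.+1 = 0)%N by lia.
    have -> : (k - k.+1 = 0)%N by lia. rewrite /=; ring.
  move=> j hj; have := nat_step R k j.+1.
  have -> : (j.+1 == k.+1) = false.
    apply/negbTE; apply: contra hj => /eqP [] hjk; apply/eqP; apply: val_inj => /=; lia.
  move=> H; rewrite -[RHS](mulr0 (e j)) -[0 in RHS]H /=; ring.
pose A := F 0. pose B := F 1 - F 0 - C.
have full : forall k, (k.+1 <= p.+2)%N ->
   (F k = A + B * k%:R + C * (k%:R * k%:R) - S k) /\
   (F k.+1 = A + B * k.+1%:R + C * (k.+1%:R * k.+1%:R) - S k.+1).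
  elim=> [|k IH] hk.
    have S0 : S 0%N = 0 by rewrite /S big1 // => j _; rewrite sub0n mulr0.
    have S1 : S 1%N = 0 by rewrite /S big1 // => j _; rewrite subSS sub0n mulr0.
    rewrite S0 S1 /A /B /=; split; ring.
  have [_ H1] := IH (ltnW hk); split => //.
  have [H0 _] := IH (ltnW hk).
  have hk' : (k < p.+1)%N by lia.
  have := Sst k hk'; rewrite /e /D /= => HS.
  have -> : S k.+2 = 2 * S k.+1 - S k + (C + C - (F k.+2 - 2 * F k.+1 + F k)) by rewrite -HS; ring.
  rewrite H1 H0 !mulrSr; ring.
exists A, B, C, (fun i => e (lift j0 i)), (fun i => (lift j0 i).+1).
split.
  move=> i; rewrite /e subr_ge0 /C -splitr; exact: Hj0.
move=> k hk.
have -> : \sum_(i < p) e (lift j0 i) * (k - (lift j0 i).+1)%:R = S k.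
  by rewrite /S (bigD1_ord j0) //= /e /C -splitr subrr mul0r add0r.
case: k hk => [|k] hk; first by case: (full 0%N isT).
by case: (full k hk).
Qed.

Lemma sum_lt (N k : nat) : (\sum_(j < N) ((j < k)%N : nat))%N = minn k N.
Proof.
elim: N => [|N IH]; first by rewrite big_ord0 minn0.
rewrite big_ord_recr /= IH; case: (ltnP N k) => h /=; lia.
Qed.

Lemma hweight_le n (x : 'I_n -> bool) : (hweight x <= n)%N.
Proof.
rewrite /hweight.
have : (\sum_(j < n) (x j : nat) <= \sum_(j < n) 1)%N by apply: leq_sum => j _; apply: leq_b1.
by rewrite sum1_card card_ord.
Qed.

Lemma termle (R : realFieldType) (d : R) (k t : nat) (b : bool) : 0 <= d ->
  - (d * (k - t)%:R) <= d * (t%:R - k%:R) * b%:R.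
Proof.
move=> hd; case: b => /=.
  rewrite mulr1; case: (leqP t k) => h.
    by rewrite natrB // -mulrN opprB.
  have -> : (k - t = 0)%N by lia.
  rewrite mulr0 oppr0; apply: mulr_ge0 => //; rewrite subr_ge0 ler_nat; lia.
by rewrite mulr0 oppr_le0; apply: mulr_ge0.
Qed.

Lemma termeq (R : realFieldType) (d : R) (k t : nat) :
  - (d * (k - t)%:R) = d * (t%:R - k%:R) * (t < k)%N%:R.
Proof.
case: (ltnP t k) => h /=.
  by rewrite mulr1 natrB 1?ltnW // -mulrN opprB.
have -> : (k - t = 0)%N by lia. by rewrite !mulr0 oppr0.
Qed.

Definition mkg (R : realFieldType) n p (A B C : R) (d : 'I_p -> R) (t : 'I_p -> nat)
  : quadpoly R ('I_n + 'I_p)%type :=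
  @QPoly R _ A (fun v => match v with inl _ => B | inr i => d i * (t i)%:R end)
    (fun v w => match v, w with inl _, inl _ => C | inl _, inr i => - d i | _, _ => 0 end).

Lemma qeval_mkg (R : realFieldType) n p (A B C : R) (d : 'I_p -> R) (t : 'I_p -> nat)
  (x : 'I_n -> bool) (y : 'I_p -> bool) :
  qeval (@mkg R n p A B C d t) (@xy_point R n p x y) =
  A + B * (hweight x)%:R + C * ((hweight x)%:R * (hweight x)%:R)
    + \sum_(i < p) d i * ((t i)%:R - (hweight x)%:R) * (y i)%:R.
Proof.
have HK : (hweight x)%:R = \sum_(j < n) (x j)%:R :> R by rewrite /hweight natr_sum.
rewrite /qeval /= !big_sumType /=.
rewrite [X in _ + (_ + X)]big1; last first.
  by move=> i _; rewrite big1 // => j _; rewrite !mul0r.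
rewrite addr0.
rewrite (eq_bigr _ (fun j _ => big_sumType _ _ _)) /=.
rewrite big_split /= HK.
rewrite -mulr_sumr.
have E1 : \sum_(i < n) \sum_(i0 < n) C * (x i)%:R * (x i0)%:R
   = C * ((\sum_(j < n) (x j)%:R) * (\sum_(j < n) (x j)%:R)).
  rewrite big_distrl big_distrr /=; apply: eq_bigr => i _.
  rewrite big_distrr big_distrr /=; apply: eq_bigr => j _; ring.
have E2 : \sum_(i < n) \sum_(i0 < p) - d i0 * (x i)%:R * (y i0)%:R
   = \sum_(i < p) - d i * (\sum_(j < n) (x j)%:R) * (y i)%:R.
  rewrite exchange_big /=; apply: eq_bigr => i _.
  rewrite big_distrr big_distrl /=; apply: eq_bigr => j _; ring.
rewrite E1 E2.
have E3 : \sum_(i < p) d i * ((t i)%:R - \sum_(j < n) (x j)%:R) * (y i)%:R =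
  \sum_(i < p) d i * (t i)%:R * (y i)%:R + \sum_(i < p) - d i * (\sum_(j < n) (x j)%:R) * (y i)%:R.
  rewrite -big_split; apply: eq_bigr => i _ /=; ring.
rewrite E3; ring.
Qed.

Theorem theorem4 (R : realFieldType) (n : nat) (hn : (2 <= n)%N)
  (f : ('I_n -> bool) -> R) (hf : symmetric_pb f) :
  exists m : nat, (m <= n - 2)%N /\
    exists g : quadpoly R ('I_n + 'I_m)%type, y_linear g /\ is_quadratization f g.
Proof.
case: n hn f hf => [|[|p]] // _ f hf.
pose F k := f (fun j : 'I_p.+2 => (j < k)%N).
have hfx : forall x, f x = F (hweight x).
  move=> x; apply: hf; rewrite [in RHS]/hweight sum_lt.
  by apply/esym/minn_idPl/hweight_le.
have [A [B [C [d [t [hd HF]]]]]] := @key R p F.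
exists p; split; first lia.
exists (@mkg R p.+2 p A B C d t); split; first by [].
move=> x; rewrite hfx (HF _ (@hweight_le _ x)); split.
  move=> y; rewrite qeval_mkg -sumrN lerD2l; apply: ler_sum => i _; exact: termle.
exists (fun i => (t i < hweight x)%N); rewrite qeval_mkg -sumrN; congr (_ + _).
by apply: eq_bigr => i _; rewrite termeq.
Qed.
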